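(* Let $E$ be a Banach lattice. Then the identity operator on $E$ is $uaw$-Dunford-Pettis if and only if $E$ is finite dimensional.
   Context: A net $(x_\alpha)$ in a Banach lattice $E$ is $uaw$-convergent to $x$ if $|x_\alpha-x|\wedge u\to 0$ weakly for every $u\in E_+$. A bounded operator $T\colon E\to E$ is $uaw$-Dunford-Pettis if every norm bounded $uaw$-null sequence $(x_n)$ in $E$ satisfies $\|Tx_n\|\to 0$. *)

(* Defs.v *)
From HB Require Import structures.
From mathcomp Require Import all_boot all_order all_algebra.
From mathcomp Require Import all_classical all_reals all_analysis.
Set Implicit Arguments. Unset Strict Implicit. Unset Printing Implicit Defensive.
Import Order.TTheory GRing.Theory Num.Theory.
Import numFieldNormedType.Exports.
Local Open Scope classical_set_scope.
Local Open Scope ring_scope.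

Section BanachLattice.
Variables (R : realType) (E : completeNormedModType R).
Variables (le : E -> E -> Prop) (join : E -> E -> E).

Definition lmeet (x y : E) : E := - join (- x) (- y).
Definition labs (x : E) : E := join x (- x).

Definition is_banach_lattice : Prop :=
  (forall x, le x x) /\
      (forall x y, le x y -> le y x -> x = y) /\
      (forall x y z, le x y -> le y z -> le x z) /\
      (forall x y z, le x y -> le (x + z) (y + z)) /\
      (forall (a : R) x y, 0 <= a -> le x y -> le (a *: x) (a *: y)) /\
      (forall x y, le x (join x y) /\ le y (join x y) /\
                   forall z, le x z -> le y z -> le (join x y) z) /\
      (forall x y, le (labs x) (labs y) -> `|x| <= `|y|).

Definition weakly_cvg (x : nat -> E) (l : E) : Prop :=
  forall f : E -> R,
    (forall u v, f (u + v) = f u + f v) ->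
    (forall (a : R) u, f (a *: u) = a * f u) ->
    continuous f ->
    (fun n => f (x n)) @ \oo --> f l.

Definition uaw_cvg (x : nat -> E) (l : E) : Prop :=
  forall u : E, le 0 u -> weakly_cvg (fun n => lmeet (labs (x n - l)) u) 0.

Definition norm_bounded (x : nat -> E) : Prop :=
  exists M : R, forall n, `|x n| <= M.

Definition uaw_dunford_pettis (T : E -> E) : Prop :=
  forall x : nat -> E, norm_bounded x -> uaw_cvg x 0 ->
    (fun n => `|T (x n)|) @ \oo --> (0 : R).

Definition finite_dimensional : Prop :=
  exists (n : nat) (b : 'I_n -> E),
    forall x : E, exists c : 'I_n -> R, x = \sum_(i < n) c i *: b i.

End BanachLattice.

(* Main.v *)
Require Import Defs.
From HB Require Import structures.
From mathcomp Require Import all_boot all_order all_algebra.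
From mathcomp Require Import all_classical all_reals all_analysis.
From mathcomp Require Import ring lra.
Import Order.TTheory GRing.Theory Num.Theory.
Import numFieldNormedType.Exports.
Local Open Scope classical_set_scope.
Local Open Scope ring_scope.

Section Ana.
Variables (R : realType) (E : normedModType R).

Lemma add_lin_0 (f : E -> R) : (forall u v, f (u + v) = f u + f v) -> f 0 = 0.
Proof. by move=> fa; have := fa 0 0; rewrite addr0 => /eqP; rewrite addrC -subr_eq subrr eq_sym => /eqP. Qed.

Lemma cont_bound (f : E -> R) :
  (forall u v, f (u + v) = f u + f v) ->
  (forall (a : R) u, f (a *: u) = a * f u) ->
  continuous f -> exists C : R, 0 < C /\ forall z, `|f z| <= C * `|z|.
Proof.
move=> fa fh fc.
have f0 := @add_lin_0 f fa.
have := fc 0 => /cvgr_dist_lt /(_ _ ltr01) /nbhs_norm0P [d d0 hd].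
exists (2 / d); split; first by rewrite divr_gt0.
move=> z; have [->|zn0] := eqVneq z 0; first by rewrite f0 normr0 normr0 mulr0.
have nz : 0 < `|z| by rewrite normr_gt0.
pose s := d / (2 * `|z|).
have s0 : 0 < s by rewrite /s divr_gt0 // mulr_gt0.
have sK : s * (2 / d * `|z|) = 1.
  rewrite /s; field; rewrite ?lt0r_neq0 //.
have : `|f 0 - f (s *: z)| < 1.
  apply: hd; rewrite /= normrZ gtr0_norm //.
  have -> : s * `|z| = d / 2 by rewrite /s; field; rewrite lt0r_neq0.
  by rewrite ltr_pdivrMr // ltr_pMr // ltr1n.
rewrite f0 sub0r normrN fh normrM gtr0_norm // => h.
move: sK h; set K := 2 / d * `|z|; set q := `|f z|; set ss := s.
have : 0 < ss by [].
move=> *; nra.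
Qed.



Lemma bound_cont (f : E -> R) :
  (forall u v, f (u + v) = f u + f v) ->
  (exists C : R, forall z, `|f z| <= C * `|z|) -> continuous f.
Proof.
move=> fa [C hC] x; apply/cvgrPdist_lt => e e0.
apply/nbhs_normP; exists (e / (`|C| + 1)) => /=.
  by rewrite divr_gt0 // ltr_pwDr.
move=> y /= hy.
have -> : f x - f y = f (x - y).
  by apply/eqP; rewrite subr_eq -fa subrK.
apply: (le_lt_trans (hC _)).
apply: (le_lt_trans (ler_wpM2r (normr_ge0 _) (ler_norm C))).
have hC1 : 0 < `|C| + 1 by rewrite ltr_pwDr.
move: hy; rewrite ltr_pdivlMr // => hy.
set a := `|C|; set b := `|x - y|.
have a0 : 0 <= a by apply: normr_ge0.
have b0 : 0 <= b by apply: normr_ge0.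
have hy2 : b * (a + 1) < e := hy.
clear hy; nra.
Qed.

Lemma terms0 (u : nat -> R) : (forall n, 0 <= u n) ->
  (exists B, forall N, \sum_(0 <= k < N) u k <= B) -> u @ \oo --> 0.
Proof.
move=> u0 [B hB]; apply: cvg_series_cvg_0.
apply: nondecreasing_is_cvgn.
  by apply: nondecreasing_series => n _ _; apply: u0.
by exists B => _ [N _ <-]; apply: hB.
Qed.

End Ana.
Section Lat.
Variables (R : realType) (E : completeNormedModType R).
Variables (le : E -> E -> Prop) (join : E -> E -> E).
Hypothesis HB : is_banach_lattice le join.

Local Notation meet := (lmeet join).
Local Notation abs := (labs join).

Lemma le_refl x : le x x. Proof. by have [h _] := HB; apply: h. Qed.
Lemma le_anti x y : le x y -> le y x -> x = y. Proof. by have [_ [h _]] := HB; apply: h. Qed.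
Lemma le_trans' x y z : le x y -> le y z -> le x z. Proof. by have [_ [_ [h _]]] := HB; apply: h. Qed.
Lemma le_add x y z : le x y -> le (x + z) (y + z). Proof. by have [_ [_ [_ [h _]]]] := HB; apply: h. Qed.
Lemma le_scale (a : R) x y : 0 <= a -> le x y -> le (a *: x) (a *: y).
Proof. by have [_ [_ [_ [_ [h _]]]]] := HB; apply: h. Qed.
Lemma join_l x y : le x (join x y). Proof. by have [_ [_ [_ [_ [_ [h _]]]]]] := HB; case: (h x y). Qed.
Lemma join_r x y : le y (join x y). Proof. by have [_ [_ [_ [_ [_ [h _]]]]]] := HB; case: (h x y) => _ []. Qed.
Lemma join_lub x y z : le x z -> le y z -> le (join x y) z.
Proof. by have [_ [_ [_ [_ [_ [h _]]]]]] := HB; case: (h x y) => _ [] _ H; apply: H. Qed.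
Lemma norm_mono x y : le (abs x) (abs y) -> `|x| <= `|y|.
Proof. by have [_ [_ [_ [_ [_ [_ h]]]]]] := HB; apply: h. Qed.
Arguments le_trans' {x} y {z}.
Arguments le_add {x y} z.
Arguments le_scale a {x y}.
Arguments le_anti {x y}.

Lemma le_addl x y z : le x y -> le (z + x) (z + y).
Proof. by rewrite ![z + _]addrC; apply: le_add. Qed.
Lemma le_add2 x y z w : le x y -> le z w -> le (x + z) (y + w).
Proof. move=> h1 h2; apply: (le_trans' (y + z)); [exact: le_add|exact: le_addl]. Qed.
Arguments le_add2 {x y z w}.
Lemma le_subr x y : le x y <-> le 0 (y - x).
Proof.
split=> h; first by rewrite -(subrr x); apply: le_add.
by rewrite -[x]add0r -[y](subrK x); apply: le_add.
Qed.
Lemma le_opp x y : le x y -> le (- y) (- x).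
Proof. by move=> /le_subr h; apply/le_subr; rewrite opprK addrC. Qed.
Lemma le_opp2 x y : le (- y) (- x) -> le x y.
Proof. by move=> /le_opp; rewrite !opprK. Qed.

Lemma join_eq x y : le x y -> join x y = y.
Proof. by move=> h; apply: le_anti; [apply: join_lub => //; apply: le_refl|apply: join_r]. Qed.
Lemma join_eq' x y : le y x -> join x y = x.
Proof. by move=> h; apply: le_anti; [apply: join_lub => //; apply: le_refl|apply: join_l]. Qed.
Arguments join_eq {x y}.
Arguments join_eq' {x y}.

Lemma joinC x y : join x y = join y x.
Proof. by apply: le_anti; apply: join_lub; (apply: join_l || apply: join_r). Qed.
Lemma join_mono x y x' y' : le x x' -> le y y' -> le (join x y) (join x' y').
Proof.
move=> h1 h2; apply: join_lub.
  exact: le_trans' h1 (join_l _ _).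
exact: le_trans' h2 (join_r _ _).
Qed.
Arguments join_mono {x y x' y'}.
Lemma join_add x y z : join (x + z) (y + z) = join x y + z.
Proof.
apply: le_anti.
  by apply: join_lub; apply: le_add; [apply: join_l|apply: join_r].
rewrite -[join (x + z) _](subrK z); apply: le_add.
apply: join_lub; rewrite -[X in le X _](addrK z); apply: le_add;
  [apply: join_l|apply: join_r].
Qed.
Lemma join_scale (a : R) x y : 0 <= a -> join (a *: x) (a *: y) = a *: join x y.
Proof.
rewrite le_eqVlt => /orP[/eqP <-|a0]; first by rewrite !scale0r join_eq //; apply: le_refl.
apply: le_anti.
  by apply: join_lub; apply: le_scale; rewrite ?ltW //; [apply: join_l|apply: join_r].
rewrite -[join (a *: x) _](scalerKV (lt0r_neq0 a0)).
apply: le_scale; first by rewrite ltW.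
apply: join_lub; rewrite -[X in le X _](scalerK (lt0r_neq0 a0));
  apply: le_scale; rewrite ?invr_ge0 ?ltW //; [apply: join_l|apply: join_r].
Qed.

Lemma meet_l x y : le (meet x y) x.
Proof. by apply: le_opp2; rewrite /lmeet opprK; apply: join_l. Qed.
Lemma meet_r x y : le (meet x y) y.
Proof. by apply: le_opp2; rewrite /lmeet opprK; apply: join_r. Qed.
Lemma meet_glb x y z : le z x -> le z y -> le z (meet x y).
Proof. by move=> h1 h2; apply: le_opp2; rewrite /lmeet opprK; apply: join_lub; apply: le_opp. Qed.
Lemma meetC x y : meet x y = meet y x.
Proof. by rewrite /lmeet joinC. Qed.
Lemma meet_eq x y : le x y -> meet x y = x.
Proof. by move=> h; apply: le_anti; [apply: meet_l|apply: meet_glb => //; apply: le_refl]. Qed.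
Arguments meet_eq {x y}.

Lemma meet_mono x y x' y' : le x x' -> le y y' -> le (meet x y) (meet x' y').
Proof.
move=> h1 h2; apply: meet_glb.
  exact: le_trans' (meet_l _ _) h1.
exact: le_trans' (meet_r _ _) h2.
Qed.
Arguments meet_mono {x y x' y'}.
Lemma meet_add x y z : meet (x + z) (y + z) = meet x y + z.
Proof. by rewrite /lmeet !opprD join_add opprD opprK. Qed.
Lemma meet_scale (a : R) x y : 0 <= a -> meet (a *: x) (a *: y) = a *: meet x y.
Proof. by move=> a0; rewrite /lmeet -!scalerN join_scale // scalerN. Qed.
Lemma meet_ge0 x y : le 0 x -> le 0 y -> le 0 (meet x y).
Proof. exact: meet_glb. Qed.
Arguments meet_ge0 {x y}.
Lemma join_meet x y : join x y + meet x y = x + y.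
Proof.
have h : join (- x) (- y) + (x + y) = join y x.
  by rewrite -join_add addrA addNr add0r addrCA addNr addr0.
by rewrite /lmeet (joinC x y) -h addrAC subrr add0r.
Qed.

Lemma meet_addl a b c : le 0 a -> le 0 b -> le 0 c ->
  le (meet (a + b) c) (meet a c + meet b c).
Proof.
move=> a0 b0 c0.
have e1 : meet a c + meet b c = meet (a + meet b c) (c + meet b c) by rewrite meet_add.
have e2 : a + meet b c = meet (b + a) (c + a) by rewrite meet_add addrC.
have e3 : c + meet b c = meet (b + c) (c + c) by rewrite meet_add addrC.
rewrite e1 e2 e3 [b + a]addrC [c + a]addrC [b + c]addrC.
apply: meet_glb; apply: meet_glb.
- exact: meet_l.
- apply: le_trans' (meet_r _ _) _; rewrite -[X in le X _]add0r; exact: le_add.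
- apply: le_trans' (meet_r _ _) _; rewrite -[X in le X _]addr0; exact: le_addl.
- apply: le_trans' (meet_r _ _) _; rewrite -[X in le X _]addr0; exact: le_addl.
Qed.


Lemma le0_eq x : le 0 x -> le x 0 -> x = 0.
Proof. by move=> h1 h2; apply: le_anti. Qed.

Lemma scale_le (s r : R) a : le 0 a -> s <= r -> le (s *: a) (r *: a).
Proof.
move=> a0 sr; apply/le_subr; rewrite -scalerBl.
rewrite -(scaler0 _ (r - s)); apply: le_scale => //; by rewrite subr_ge0.
Qed.

Lemma scale_ge0 (s : R) a : 0 <= s -> le 0 a -> le 0 (s *: a).
Proof. by move=> s0 a0; rewrite -(scaler0 _ s); apply: le_scale. Qed.

Lemma abs_le x : le x (abs x). Proof. exact: join_l. Qed.
Lemma abs_leN x : le (- x) (abs x). Proof. exact: join_r. Qed.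
Lemma abs_lub x z : le x z -> le (- x) z -> le (abs x) z. Proof. exact: join_lub. Qed.
Lemma abs_ge0 x : le 0 (abs x).
Proof.
have h : le 0 (abs x + abs x).
  by rewrite -(subrr x) addrC; apply: le_add2; [apply: abs_leN|apply: abs_le].
have -> : abs x = (2 : R)^-1 *: (abs x + abs x).
  have h2 : (2 : R)^-1 + 2^-1 = 1 by rewrite [in RHS](splitr 1) mul1r.
  by rewrite scalerDr -scalerDl h2 scale1r.
by apply: scale_ge0 => //; rewrite invr_ge0.
Qed.
Lemma abs_pos x : le 0 x -> abs x = x.
Proof.
move=> x0; apply: join_eq'; apply: (le_trans' 0) => //.
by rewrite -oppr0; apply: le_opp.
Qed.
Arguments abs_pos {x}.
Lemma absN x : abs (- x) = abs x.
Proof. by rewrite /labs opprK joinC. Qed.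
Lemma abs_scale (s : R) a : le 0 a -> abs (s *: a) = `|s| *: a.
Proof.
move=> a0; have [s0|s0] := leP 0 s.
  by rewrite ger0_norm // abs_pos //; apply: scale_ge0.
rewrite ltr0_norm // -absN -scaleNr abs_pos //; apply: scale_ge0 => //.
by rewrite oppr_ge0 ltW.
Qed.
Lemma abs_add x y : le (abs (x + y)) (abs x + abs y).
Proof.
apply: abs_lub; first by apply: le_add2; apply: abs_le.
by rewrite opprD; apply: le_add2; apply: abs_leN.
Qed.
Lemma norm_abs x : `|abs x| = `|x|.
Proof.
have h : abs (abs x) = abs x by rewrite abs_pos //; apply: abs_ge0.
by apply/eqP; rewrite eq_le !norm_mono // h; apply: le_refl.
Qed.
Lemma norm_le a b : le 0 a -> le a b -> `|a| <= `|b|.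
Proof.
move=> a0 ab; apply: norm_mono; rewrite abs_pos // abs_pos //.
exact: le_trans' ab.
Qed.
Arguments norm_le {a b}.

Lemma pp_ge0 w : le 0 (join w 0). Proof. exact: join_r. Qed.
Lemma pp_decomp x : x = join x 0 - join (- x) 0.
Proof.
have -> : join (- x) 0 = join x 0 - x.
  by rewrite -join_add subrr sub0r joinC.
by rewrite opprB addrC subrK.
Qed.
Lemma pp_meet w : meet (join w 0) (join (- w) 0) = 0.
Proof.
have -> : join (- w) 0 = join w 0 - w.
  by rewrite -join_add subrr sub0r joinC.
rewrite -[X in meet X _]add0r -[X in meet _ X]addrC meet_add.
rewrite /lmeet oppr0 opprK joinC.
by rewrite addrC subrr.
Qed.
Lemma pp_eq0 w : join w 0 = 0 <-> le w 0.
Proof.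
split=> [h|h]; last by apply: join_eq.
by rewrite -h; apply: join_l.
Qed.
Lemma pp_le_abs x : le (join x 0) (abs x).
Proof. by apply: join_lub; [apply: abs_le|apply: abs_ge0]. Qed.

Lemma archi x w : le 0 x -> (forall e : R, 0 < e -> le w (e *: x)) -> le w 0.
Proof.
move=> x0 h.
suff : join w 0 = 0 by move/pp_eq0.
apply/normr0_eq0/eqP; rewrite eq_le normr_ge0 andbT.
apply/ler_addgt0Pr => e e0; rewrite add0r.
have [x0'|xn0] := eqVneq `|x| 0.
  have : le (join w 0) (join (1 *: x) 0) by apply: join_mono; [apply: h|apply: le_refl].
  rewrite scale1r (join_eq' x0) => /(norm_le (pp_ge0 _)).
  by rewrite x0' => /le_trans; apply; rewrite ltW.
have xp : 0 < `|x| by rewrite normr_gt0 -normr_eq0.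
have h1 := h (e / `|x|) (divr_gt0 e0 xp).
have eg : 0 <= e / `|x| by rewrite divr_ge0 ?ltW.
have h2 : le (join w 0) ((e / `|x|) *: x).
  by rewrite -(join_eq' (scale_ge0 _ _ eg x0)); apply: join_mono h1 (le_refl 0).
have := norm_le (pp_ge0 _) h2.
rewrite normrZ ger0_norm // divfK ?lt0r_neq0 //.
Qed.

Arguments archi {x w}.

Lemma disj_scale a b (s r : R) : le 0 a -> le 0 b -> meet a b = 0 ->
  0 <= s -> 0 <= r -> meet (s *: a) (r *: b) = 0.
Proof.
move=> a0 b0 ab s0 r0; apply: le0_eq.
  by apply: meet_ge0; apply: scale_ge0.
rewrite -(scaler0 _ (Num.max s r)) -ab -meet_scale; last by rewrite le_max s0.
by apply: meet_mono; apply: scale_le => //; rewrite le_max lexx ?orbT.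
Qed.


Lemma le_sub0 a b : le a b -> le (a - b) 0.
Proof. by move=> h; rewrite -(subrr b); apply: le_add. Qed.
Lemma le_sub0' a b : le (a - b) 0 -> le a b.
Proof. by move=> h; have := le_add b h; rewrite subrK add0r. Qed.

Definition atom a := le 0 a /\ a <> 0 /\
  forall y, le 0 y -> le y a -> exists t : R, y = t *: a.

Lemma split_nonatom x y : le 0 x -> le 0 y -> le y x ->
  (forall t : R, y <> t *: x) ->
  exists a b, [/\ le 0 a, le 0 b, a <> 0, b <> 0 &
     [/\ meet a b = 0, le a x & le b x]].
Proof.
move=> x0 y0 yx ynt.
have [[t [t01 /= [nyt nty]]]|H] := pselect (exists t : R,
   (0 <= t <= 1) /\ (~ le y (t *: x) /\ ~ le (t *: x) y)); last first.
  have {}H : forall t : R, 0 <= t <= 1 -> le y (t *: x) \/ le (t *: x) y.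
    move=> t t01; apply: contrapT => /not_orP [h1 h2]; apply: H.
    by exists t.
  exfalso.
  pose T := [set t : R | (0 <= t <= 1) /\ le (t *: x) y].
  have T0 : T 0 by split; rewrite ?lexx ?ler01 // scale0r.
  have hsT : has_sup T by split; [exists 0|exists 1 => t [/andP[]]].
  set c := sup T.
  have c0 : 0 <= c by apply: sup_upper_bound.
  have c1 : c <= 1 by apply: ge_sup; [exists 0|move=> t [/andP[]]].
  have cxy : le (c *: x) y.
    apply: le_sub0'; apply: (archi x0) => e e0.
    have [t Tt ct] := sup_adherent e0 hsT.
    have tc : t <= c by apply: sup_upper_bound.
    have -> : c *: x - y = (c - t) *: x + (t *: x - y).
      by rewrite scalerBl addrA subrK.
    rewrite -[e *: x]addr0; apply: le_add2.
      by apply: scale_le => //; move: ct tc; rewrite /c; lra.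
    by apply: le_sub0; case: Tt.
  have ycx : le y (c *: x).
    have [->|c1'] := eqVneq c 1; first by rewrite scale1r.
    have c1s : c < 1 by rewrite lt_neqAle c1' c1.
    apply: le_sub0'; apply: (archi x0) => e e0.
    pose t := c + Num.min e (1 - c).
    have tc : c < t by rewrite /t ltrDl lt_min e0 subr_gt0.
    have t01 : 0 <= t <= 1.
      apply/andP; split; first by rewrite /t addr_ge0 // le_min ltW // subr_ge0.
      by rewrite /t -lerBrDl ge_min lexx orbT.
    have tce : t - c <= e by rewrite /t addrAC subrr add0r ge_min lexx.
    have yt : le y (t *: x).
      case: (H t t01) => // htx; exfalso.
      have : t <= c by apply: sup_upper_bound.
      by rewrite leNgt tc.
    have -> : y - c *: x = (y - t *: x) + (t - c) *: x.
      by rewrite scalerBl addrA subrK.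
    rewrite -[e *: x]add0r; apply: le_add2; first by apply: le_sub0.
    exact: scale_le.
  by apply: (ynt c); apply: le_anti.
move: t01 => /andP[t0 t1].
exists (join (y - t *: x) 0), (join (t *: x - y) 0); split.
- exact: pp_ge0.
- exact: pp_ge0.
- by move/pp_eq0 => /le_sub0'.
- by move/pp_eq0 => /le_sub0'.
split.
- by rewrite -[t *: x - y]opprB pp_meet.
- apply: join_lub => //; apply: (le_trans' y) => //.
  rewrite -[X in le _ X]subr0; apply: le_addl; apply: le_opp.
  exact: scale_ge0.
- apply: join_lub => //; apply: (le_trans' (t *: x)).
    rewrite -[X in le _ X]subr0; apply: le_addl; exact: le_opp.
  by rewrite -[X in le _ X]scale1r; apply: scale_le.
Qed.


Arguments split_nonatom {x y}.

Definition dseq (d : nat -> E) :=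
  (forall n, le 0 (d n) /\ d n <> 0) /\
  (forall n m, n <> m -> meet (d n) (d m) = 0).

Lemma dseq_sym (d : nat -> E) : (forall n, le 0 (d n) /\ d n <> 0) ->
  (forall n m, (n < m)%N -> meet (d n) (d m) = 0) -> dseq d.
Proof.
move=> h1 h2; split => // n m nm.
have [/h2 //|/h2|/eqP] := ltngtP n m; last by rewrite (negbTE (introN eqP nm)).
by rewrite meetC.
Qed.

Definition sspec z (p : E * E) := [/\ le 0 p.1, le 0 p.2, p.1 <> 0, p.2 <> 0 &
     [/\ meet p.1 p.2 = 0, le p.1 z & le p.2 z]].

Lemma chain x0 : le 0 x0 -> x0 <> 0 ->
  (forall z, le 0 z -> z <> 0 -> le z x0 -> ~ atom z) -> exists d, dseq d.
Proof.
move=> x00 x0n0 Hna.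
have Hs : forall z, le 0 z -> z <> 0 -> le z x0 -> exists p, sspec z p.
  move=> z z0 zn0 zx.
  have := Hna z z0 zn0 zx; rewrite /atom => /not_andP [//|/not_andP [//|]].
  move=> /existsNP [y /not_implyP [y0 /not_implyP [yz /forallNP ynt]]].
  have [a [b [a0 b0 an0 bn0 [ab az bz]]]] := split_nonatom z0 y0 yz ynt.
  by exists (a, b).
pose g z := if pselect (exists p, sspec z p) is left h then projT1 (cid h) else (0, 0).
have gP : forall z, (exists p, sspec z p) -> sspec z (g z).
  by move=> z h; rewrite /g; case: pselect => // h'; exact: (projT2 (cid h')).
pose b n := iter n (fun z => (g z).2) x0.
have Inv : forall n, [/\ le 0 (b n), b n <> 0 & le (b n) x0].
  elim=> [|n [h1 h2 h3]]; first by split => //; apply: le_refl.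
  have [s1 s2 s3 s4 [s5 s6 s7]] := gP _ (Hs _ h1 h2 h3).
  split => //=; exact: le_trans' h3.
have gb : forall n, sspec (b n) (g (b n)).
  by move=> n; have [h1 h2 h3] := Inv n; apply: gP; apply: Hs.
have mono : forall k n, le (b (k + n)%N) (b n).
  elim=> [|k IH] n; first by apply: le_refl.
  apply: le_trans' (IH n).
  by have [_ _ _ _ [_ _ h]] := gb (k + n)%N.
exists (fun n => (g (b n)).1); apply: dseq_sym.
  by move=> n; have [h1 _ h3 _ _] := gb n.
move=> n m nm.
have [s1 s2 s3 s4 [s5 s6 s7]] := gb n.
have [t1 t2 t3 t4 [t5 t6 t7]] := gb m.
apply: le0_eq; first by apply: meet_ge0.
rewrite -s5; apply: meet_mono; first by apply: le_refl.
apply: le_trans' t6 _.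
have -> : m = ((m - n.+1) + n.+1)%N by rewrite subnK.
exact: mono.
Qed.


Arguments chain {x0}.

Lemma atom_below : ~ (exists d, dseq d) ->
  forall z, le 0 z -> z <> 0 -> exists a, atom a /\ le a z.
Proof.
move=> nos z z0 zn0; apply: contrapT => nb; apply: nos.
apply: (chain z0 zn0) => w w0 wn0 wz aw; apply: nb; by exists w.
Qed.

Arguments atom_below _ {z}.

Definition good (L : seq E) := [/\ uniq L, (forall a, a \in L -> atom a) &
  (forall a b, a \in L -> b \in L -> a <> b -> meet a b = 0)].

Lemma meet_self a : meet a a = a.
Proof. by apply: meet_eq; apply: le_refl. Qed.

Lemma atoms_list : ~ (exists d, dseq d) ->
  exists L, good L /\ forall z, le 0 z -> z <> 0 -> exists2 a, a \in L & meet a z <> 0.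
Proof.
move=> nos; apply: contrapT => nH.
have Hb : forall L, good L -> exists b, atom b /\ forall a, a \in L -> meet a b = 0.
  move=> L gL.
  have : ~ (forall z, le 0 z -> z <> 0 -> exists2 a, a \in L & meet a z <> 0).
    by move=> h; apply: nH; exists L.
  move=> /existsNP [z /not_implyP [z0 /not_implyP [zn0 nz]]].
  have [b [ab bz]] := atom_below nos z0 zn0.
  exists b; split => // a aL; have [_ ga _] := gL.
  have [a0 _] := ga a aL.
  have [b0 _] := ab.
  apply: le0_eq; first by apply: meet_ge0.
  have -> : (0 : E) = meet a z.
    by apply: contrapT => h; apply: nz; exists a => // e; apply: h; rewrite e.
  by apply: meet_mono => //; apply: le_refl.
pose h (L : seq E) := if pselect (exists b, atom b /\ forall a, a \in L -> meet a b = 0) is left p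
  then projT1 (cid p) else 0.
have hP : forall L, good L -> atom (h L) /\ forall a, a \in L -> meet a (h L) = 0.
  move=> L gL; rewrite /h; case: pselect => [p|np]; first exact: (projT2 (cid p)).
  by exfalso; apply: np; apply: Hb.
pose l n := iter n (fun L => h L :: L) [::].
have Inv : forall n, good (l n).
  elim=> [|n IH]; first by split => //.
  have [[b0 [bn0 _]] bd] := hP _ IH.
  have [u1 u2 u3] := IH.
  have bnot : h (l n) \notin l n.
    apply/negP => bin; apply: bn0; by rewrite -(bd _ bin) meet_self.
  split => /=.
  - by rewrite bnot u1.
  - move=> a; rewrite inE => /orP[/eqP ->|]; last exact: u2.
    by have [] := hP _ IH.
  - move=> a c; rewrite !inE => /orP[/eqP ->|aL] /orP[/eqP ->|cL] ac //.
    + by rewrite meetC; apply: bd.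
    + by apply: bd.
    + by apply: u3.
have mem : forall n m, (n < m)%N -> h (l n) \in l m.
  move=> n; elim=> // m IH; rewrite ltnS leq_eqVlt => /orP[/eqP <-|nm].
    by rewrite /= inE eqxx.
  by rewrite /= inE (IH nm) orbT.
apply: nos; exists (fun n => h (l n)); apply: dseq_sym.
  by move=> n; have [[? [? _]] _] := hP _ (Inv n).
move=> n m nm.
by have [_ ->] := hP _ (Inv m); [|apply: mem].
Qed.


Lemma rep_aux (L : seq E) : (forall a, a \in L -> atom a) ->
  forall z, le 0 z -> exists (t : nat -> R) r,
  [/\ z = \sum_(i < size L) t i *: L`_i + r, le 0 r, le r z,
      (forall i, 0 <= t i /\ le (t i *: L`_i) z) &
      (forall a (s : R), a \in L -> 0 < s -> ~ le (s *: a) r)].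
Proof.
elim: L => [_ z z0|a L IH hL z z0].
  exists (fun _ => 0), z; split => //.
  - by rewrite big_ord0 add0r.
  - exact: le_refl.
  - by move=> i; rewrite scale0r lexx; split.
have [a0 [an0 aat]] := hL a (mem_head _ _).
have [t [r [zr r0 rz ht hr]]] := IH (fun b bL => hL b (mem_behead (s:=a :: L) bL)) z z0.
pose S := [set s : R | 0 <= s /\ le (s *: a) r].
have S0 : S 0 by split; rewrite ?lexx // scale0r.
have na : 0 < `|a| by rewrite normr_gt0; apply/eqP.
have hsS : has_sup S.
  split; first by exists 0.
  exists (`|r| / `|a|) => s [s0 sar].
  rewrite ler_pdivlMr //.
  have := norm_le (scale_ge0 _ _ s0 a0) sar.
  by rewrite normrZ ger0_norm.
set tau := sup S.
have tau0 : 0 <= tau by apply: sup_upper_bound.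
have taur : le (tau *: a) r.
  apply: le_sub0'; apply: (archi a0) => e e0.
  have [s Ss se] := sup_adherent e0 hsS.
  have stau : s <= tau by apply: sup_upper_bound.
  have -> : tau *: a - r = (tau - s) *: a + (s *: a - r).
    by rewrite scalerBl addrA subrK.
  rewrite -[e *: a]addr0; apply: le_add2.
    by apply: scale_le => //; move: se stau; rewrite /tau; lra.
  by apply: le_sub0; case: Ss.
have r'r : le (r - tau *: a) r.
  rewrite -[X in le _ X]subr0; apply: le_addl; apply: le_opp; exact: scale_ge0.
exists (fun i => if i is i'.+1 then t i' else tau), (r - tau *: a); split.
- rewrite big_ord_recl zr.
  have -> : \sum_(i < size L) (fun i : nat => if i is i'.+1 then t i' else tau) (lift ord0 i) *: (a :: L)`_(lift ord0 i) = \sum_(i < size L) t i *: L`_i.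
    by apply: eq_bigr => i _.
  rewrite /= [tau *: a + _]addrC -addrA; congr (_ + _).
  by rewrite addrC subrK.
- by have := (proj1 (le_subr (tau *: a) r) taur).
- exact: le_trans' r'r rz.
- case=> [|i] /=; last exact: ht.
  by split => //; apply: le_trans' taur rz.
- move=> b s; rewrite inE => /orP[/eqP ->|bL] s0 hb.
    have : s + tau <= tau.
      apply: sup_upper_bound => //; split; first by rewrite addr_ge0 // ltW.
      rewrite scalerDl; have := le_add (tau *: a) hb; by rewrite subrK.
    by rewrite gerDr leNgt s0.
  by apply: (hr b s bL s0); apply: le_trans' hb r'r.
Qed.

Lemma pos_rep (L : seq E) : good L ->
  (forall z, le 0 z -> z <> 0 -> exists2 a, a \in L & meet a z <> 0) ->
  forall z, le 0 z -> exists t : nat -> R,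
  z = \sum_(i < size L) t i *: L`_i /\
  (forall i, 0 <= t i /\ le (t i *: L`_i) z).
Proof.
move=> [uL aL dL] meetL z z0.
have [t [r [zr r0 rz ht hr]]] := @rep_aux L aL z z0.
exists t; split => //.
suff r00 : r = 0 by rewrite zr r00 addr0.
apply: contrapT => rn0.
have [a ain ar] := meetL r r0 rn0.
have [a0 [an0 aat]] := aL a ain.
have [s es] := aat (meet a r) (meet_ge0 a0 r0) (meet_l _ _).
have s0 : 0 < s.
  rewrite ltNge; apply/negP => s0; apply: ar; apply: le0_eq.
    exact: meet_ge0.
  by rewrite es -(scale0r a); apply: scale_le.
by apply: (hr a s ain s0); rewrite -es; apply: meet_r.
Qed.


Lemma add_ge0' a b : le 0 a -> le 0 b -> le 0 (a + b).
Proof. by move=> h1 h2; have := le_add2 h1 h2; rewrite addr0. Qed.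

Lemma le_sum (I : Type) (r : seq I) (P : pred I) (F G : I -> E) :
  (forall i, P i -> le (F i) (G i)) ->
  le (\sum_(i <- r | P i) F i) (\sum_(i <- r | P i) G i).
Proof.
move=> h; apply: (big_ind2 (fun x y => le x y)) => //.
- exact: le_refl.
- by move=> ? ? ? ? ? ?; apply: le_add2.
Qed.

Lemma sum_ge0 (I : Type) (r : seq I) (P : pred I) (F : I -> E) :
  (forall i, P i -> le 0 (F i)) -> le 0 (\sum_(i <- r | P i) F i).
Proof.
move=> h; have := @le_sum I r P (fun _ => 0) F h; by rewrite big1.
Qed.

Lemma dseq_uaw (d : nat -> E) : (forall n, le 0 (d n)) ->
  (forall n m, n <> m -> meet (d n) (d m) = 0) -> uaw_cvg le join d 0.
Proof.
move=> d0 dd u u0 f fa fh fc.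
have f0 := @add_lin_0 _ _ f fa.
rewrite f0.
have ey : forall n, lmeet join (labs join (d n - 0)) u = meet (d n) u.
  by move=> n; rewrite subr0 abs_pos.
have -> : (fun n => f (lmeet join (labs join (d n - 0)) u)) = (fun n => f (meet (d n) u)).
  by apply: funext => n; rewrite ey.
set y := fun n => meet (d n) u.
have y0 : forall n, le 0 (y n) by move=> n; apply: meet_ge0.
have yu : forall n, le (y n) u by move=> n; apply: meet_r.
have yd : forall n m, n <> m -> meet (y n) (y m) = 0.
  move=> n m nm; apply: le0_eq; first exact: meet_ge0.
  rewrite -(dd n m nm); apply: meet_mono; apply: meet_l.
have PS : forall N, [/\ le 0 (\sum_(0 <= k < N) y k), le (\sum_(0 <= k < N) y k) u &
     forall m, (N <= m)%N -> meet (\sum_(0 <= k < N) y k) (y m) = 0].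
  elim=> [|N [s0 su sd]].
    rewrite big_geq //; split; [exact: le_refl|exact: u0|].
    by move=> m _; apply: meet_eq.
  rewrite big_nat_recr //=; split.
  - exact: add_ge0'.
  - rewrite -[_ + y N]join_meet.
    rewrite (sd N (leqnn N)) addr0; exact: join_lub.
  - move=> m Nm; apply: le0_eq; first by apply: meet_ge0 => //; exact: add_ge0'.
    apply: (le_trans' _ (meet_addl _ _ _ s0 (y0 N) (y0 m))).
    rewrite (sd m (ltnW Nm)) (yd N m) ?addr0; first exact: le_refl.
    by move=> e; rewrite e ltnn in Nm.
have [C [C0 hC]] := @cont_bound _ _ f fa fh fc.
apply: norm_cvg0.
apply: (@terms0 R) => [n|]; first exact: normr_ge0.
exists (C * `|u|) => N.
pose s k := if 0 <= f (y k) then (1 : R) else -1.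
have hs : forall k, `|f (y k)| = s k * f (y k).
  by move=> k; rewrite /s; case: ifP => h; [rewrite ger0_norm // mul1r|rewrite ltr0_norm ?mulN1r // ltNge h].
under eq_bigr do rewrite hs.
have -> : \sum_(0 <= k < N) s k * f (y k) = f (\sum_(0 <= k < N) s k *: y k).
  rewrite (big_morph f fa f0); apply: eq_bigr => k _; by rewrite fh.
apply: le_trans (ler_norm _) _; apply: le_trans (hC _) _.
suff H : le (abs (\sum_(0 <= k < N) s k *: y k)) (abs u) by rewrite ler_pM2l //; exact: (norm_mono _ _ H).
rewrite (abs_pos u0).
have [_ su _] := PS N.
have hsy : forall k, le (s k *: y k) (y k) /\ le (- (s k *: y k)) (y k).
  move=> k.
  have ny : le (- y k) (y k).
    apply: (le_trans' 0); last exact: y0.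
    by rewrite -oppr0; apply: le_opp; exact: y0.
  move: ny; rewrite /s; generalize (y k) => v ny.
  case: ifP => _; first by rewrite scale1r; split; [exact: le_refl|].
  by rewrite scaleN1r opprK; split; [|exact: le_refl].
apply: abs_lub; apply: le_trans' su.
  by apply: le_sum => k _; case: (hsy k).
by rewrite -sumrN; apply: le_sum => k _; case: (hsy k).
Qed.



Arguments pos_rep {L} _ _ {z}.
Arguments dseq_uaw {d}.

Lemma span_L (L : seq E) : good L ->
  (forall z, le 0 z -> z <> 0 -> exists2 a, a \in L & meet a z <> 0) ->
  finite_dimensional E.
Proof.
move=> gL mL; exists (size L), (fun i => L`_i) => x.
have [t1 [e1 _]] := pos_rep gL mL (pp_ge0 x).
have [t2 [e2 _]] := pos_rep gL mL (pp_ge0 (- x)).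
exists (fun i => t1 i - t2 i).
rewrite {1}(pp_decomp x) e1 e2 -sumrB; apply: eq_bigr => i _.
by rewrite scalerBl.
Qed.

Arguments span_L {L}.

Lemma fwd : uaw_dunford_pettis le join (fun x : E => x) -> finite_dimensional E.
Proof.
move=> H.
have nos : ~ (exists d, dseq d).
  case=> d [dpos ddisj].
  pose x n := `|d n|^-1 *: d n.
  have nd : forall n, 0 < `|d n| by move=> n; rewrite normr_gt0; apply/eqP; case: (dpos n).
  have x0 : forall n, le 0 (x n).
    by move=> n; apply: scale_ge0; [rewrite invr_ge0 ltW|case: (dpos n)].
  have xd : forall n m, n <> m -> meet (x n) (x m) = 0.
    move=> n m nm; apply: disj_scale; rewrite ?invr_ge0 ?ltW //.
    - by case: (dpos n).
    - by case: (dpos m).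
    - exact: ddisj.
  have xn : forall n, `|x n| = 1.
    by move=> n; rewrite normrZ ger0_norm ?invr_ge0 ?ltW // mulVf ?lt0r_neq0.
  have xb : norm_bounded x by exists 1 => n; rewrite xn.
  have Hc := H x xb (dseq_uaw x0 xd).
  have e : (fun n => `|(fun x : E => x) (x n)|) = (fun _ => (1 : R)).
    by apply: funext => n; rewrite xn.
  rewrite e in Hc.
  have [n /=] := filter_ex (cvgr_dist_lt _ _ Hc _ ltr01).
  by rewrite sub0r normrN normr1 ltxx.
have [L [gL mL]] := atoms_list nos.
exact: span_L gL mL.
Qed.


Lemma indep k (d : 'I_k -> E) (w : 'I_k -> R) :
  (forall i, le 0 (d i) /\ d i <> 0) ->
  (forall i j, i <> j -> meet (d i) (d j) = 0) ->
  \sum_(i < k) w i *: d i = 0 -> forall j, w j = 0.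
Proof.
move=> dp dd hs j.
have [dj0 djn0] := dp j.
rewrite (bigD1 j) //= in hs.
set T' := \sum_(i < k | i != j) w i *: d i in hs.
have e : w j *: d j = - T' by apply/eqP; rewrite -subr_eq0 opprK hs.
pose T := \sum_(i < k | i != j) `|w i| *: d i.
have hT : le (abs T') T.
  apply: (big_ind2 (fun x y => le (abs x) y)).
  - by rewrite abs_pos; apply: le_refl.
  - move=> x1 x2 y1 y2 h1 h2; apply: le_trans' (abs_add _ _) _; exact: le_add2.
  - move=> i _; rewrite abs_scale; [exact: le_refl|by case: (dp i)].
have hTd : le 0 T /\ meet T (d j) = 0.
  apply: (big_ind (fun X => le 0 X /\ meet X (d j) = 0)).
  - by split; [apply: le_refl|apply: meet_eq].
  - move=> x y [x0 xd] [y0 yd]; split; first exact: add_ge0'.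
    apply: le0_eq; first by apply: meet_ge0 => //; exact: add_ge0'.
    apply: (le_trans' _ (meet_addl _ _ _ x0 y0 dj0)).
    by rewrite xd yd addr0; apply: le_refl.
  - move=> i ij; have [di0 _] := dp i; split; first by apply: scale_ge0.
    rewrite -[d j]scale1r; apply: disj_scale => //.
    by apply: dd; apply/eqP.
apply: contrapT => wn0.
pose m := Num.min `|w j| 1.
have m0 : 0 < m by rewrite /m lt_min ltr01 normr_gt0 andbT; apply/eqP.
have h1 : le (m *: d j) T.
  apply: (le_trans' (`|w j| *: d j)); first by apply: scale_le => //; rewrite /m ge_min lexx.
  by rewrite -abs_scale // e absN.
have h2 : le (m *: d j) (d j).
  by rewrite -[X in le _ X]scale1r; apply: scale_le => //; rewrite /m ge_min lexx orbT.
have : m *: d j = 0.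
  apply: le0_eq; first by apply: scale_ge0 => //; rewrite ltW.
  by case: hTd => _ <-; apply: meet_glb.
by move/eqP; rewrite scaler_eq0 (negbTE (lt0r_neq0 m0)) /= => /eqP.
Qed.


Lemma fin_noseq : finite_dimensional E -> ~ (exists d, dseq d).
Proof.
move=> [n [b hb]] [d [dp dd]].
have cc : forall i : 'I_n.+1, {c : 'I_n -> R | d i = \sum_(j < n) c j *: b j}.
  by move=> i; exact: (cid (hb (d i))).
pose C := \matrix_(i < n.+1, j < n) projT1 (cc i) j.
pose K := kermx C.
have Kn0 : K != 0.
  rewrite -mxrank_eq0 /K mxrank_ker -lt0n subn_gt0 ltnS.
  exact: rank_leq_col.
have [i ri] : exists i, row i K != 0.
  apply: contrapT => hn; move/eqP: Kn0; apply; apply/row_matrixP => i.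
  rewrite row0; apply/eqP; apply: contrapT => h; apply: hn; exists i; exact/negP.
pose w := row i K.
have wC : w *m C = 0 by apply/sub_kermxP; exact: row_sub.
have hs : \sum_(m < n.+1) w 0 m *: d m = 0.
  have -> : \sum_(m < n.+1) w 0 m *: d m =
      \sum_(m < n.+1) \sum_(j < n) (w 0 m * C m j) *: b j.
    apply: eq_bigr => m _; rewrite (projT2 (cc m)) scaler_sumr.
    by apply: eq_bigr => j _; rewrite scalerA /C mxE.
  rewrite exchange_big /=.
  rewrite (eq_bigr (fun j => (w *m C) 0 j *: b j)); last first.
    by move=> j _; rewrite mxE scaler_suml.
  by rewrite wC; apply: big1 => j _; rewrite mxE scale0r.
have w0 := @indep n.+1 (fun m => d m) (fun m => w 0 m)
  (fun m => dp m) (fun m1 m2 h => dd m1 m2 (fun e => h (val_inj e))) hs.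
apply: (negP ri); apply/eqP/rowP => m; rewrite [RHS]mxE; exact: (w0 m).
Qed.


Lemma coords (L : seq E) : good L ->
  (forall z, le 0 z -> z <> 0 -> exists2 a, a \in L & meet a z <> 0) ->
  exists phi : E -> nat -> R,
  [/\ forall x, x = \sum_(i < size L) phi x i *: L`_i,
      forall x y (i : 'I_(size L)), phi (x + y) i = phi x i + phi y i,
      forall (c : R) x (i : 'I_(size L)), phi (c *: x) i = c * phi x i &
      forall z, le 0 z -> forall i : 'I_(size L), 0 <= phi z i /\ phi z i * `|L`_i| <= `|z|].
Proof.
move=> gL mL; have [uL aL dL] := gL.
have span : forall x, exists c : nat -> R, x = \sum_(i < size L) c i *: L`_i.
  move=> x.
  have [t1 [e1 _]] := pos_rep gL mL (pp_ge0 x).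
  have [t2 [e2 _]] := pos_rep gL mL (pp_ge0 (- x)).
  exists (fun i => t1 i - t2 i).
  rewrite {1}(pp_decomp x) e1 e2 -sumrB; apply: eq_bigr => i _.
  by rewrite scalerBl.
have uniqc : forall c c' : nat -> R,
    \sum_(i < size L) c i *: L`_i = \sum_(i < size L) c' i *: L`_i ->
    forall i : 'I_(size L), c i = c' i.
  move=> c c' e i; apply/eqP; rewrite -subr_eq0; apply/eqP.
  apply: (@indep (size L) (fun i => L`_i) (fun i => c i - c' i)) => //.
  - move=> j; have [? [? _]] := aL _ (mem_nth 0 (ltn_ord j)); by split.
  - move=> j1 j2 j12; apply: dL; try exact: mem_nth.
    move=> ee; apply: j12; apply: val_inj; apply/eqP; rewrite -(nth_uniq 0 (ltn_ord j1) (ltn_ord j2) uL); exact/eqP.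
  - rewrite (eq_bigr (fun j : 'I_(size L) => c j *: L`_j - c' j *: L`_j)); last by move=> j _; rewrite scalerBl.
    by rewrite sumrB e subrr.
pose phi x := projT1 (cid (span x)).
have phiP : forall x, x = \sum_(i < size L) phi x i *: L`_i.
  by move=> x; exact: (projT2 (cid (span x))).
exists phi; split => //.
- move=> x y i; apply: (uniqc (phi (x + y)) (fun j => phi x j + phi y j)).
  rewrite -phiP (eq_bigr (fun j : 'I_(size L) => phi x j *: L`_j + phi y j *: L`_j)); last by move=> j _; rewrite scalerDl.
  by rewrite big_split /= -!phiP.
- move=> c x i; apply: (uniqc (phi (c *: x)) (fun j => c * phi x j)).
  rewrite -phiP (eq_bigr (fun j : 'I_(size L) => c *: (phi x j *: L`_j))); last by move=> j _; rewrite scalerA.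
  by rewrite -scaler_sumr -phiP.
- move=> z z0 i.
  have [t [et ht]] := pos_rep gL mL z0.
  have -> : phi z i = t i by apply: (uniqc (phi z) t); rewrite -phiP -et.
  have [t0 tz] := ht i; split => //.
  have := norm_le (scale_ge0 _ _ t0 (proj1 (aL _ (mem_nth 0 (ltn_ord i))))) tz.
  by rewrite normrZ ger0_norm.
Qed.


Arguments coords {L}.

Lemma bwd : finite_dimensional E -> uaw_dunford_pettis le join (fun x : E => x).
Proof.
move=> fd x [M hM] hx.
have [L [gL mL]] := atoms_list (fin_noseq fd).
have [phi [phiP phiD phiZ phiB]] := coords gL mL.
have [uL aL dL] := gL.
set k := size L in phi phiP phiD phiZ phiB *.
have a0 : forall i : 'I_k, le 0 L`_i /\ 0 < `|L`_i|.
  move=> i; have [h1 [h2 _]] := aL _ (mem_nth 0 (ltn_ord i)); split => //; rewrite normr_gt0; exact/eqP.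
pose Psi z := \sum_(i < k) phi z i * `|L`_i|.
have PsiD : forall u v, Psi (u + v) = Psi u + Psi v.
  move=> u v; rewrite /Psi -big_split; apply: eq_bigr => i _; by rewrite phiD mulrDl.
have PsiZ : forall (c : R) u, Psi (c *: u) = c * Psi u.
  move=> c u; rewrite /Psi mulr_sumr; apply: eq_bigr => i _; by rewrite phiZ mulrA.
have phiN : forall z (i : 'I_k), phi (- z) i = - phi z i.
  by move=> z i; rewrite -scaleN1r phiZ mulN1r.
have phib : forall z (i : 'I_k), `|phi z i| * `|L`_i| <= 2 * `|z|.
  move=> z i.
  have e : phi z i = phi (join z 0) i - phi (join (- z) 0) i.
    by rewrite -phiN -phiD -pp_decomp.
  have [p1 q1] := phiB _ (pp_ge0 z) i.
  have [p2 q2] := phiB _ (pp_ge0 (- z)) i.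
  have n1 : `|join z 0| <= `|z|.
    rewrite -(norm_abs z); apply: norm_le; [exact: pp_ge0|exact: pp_le_abs].
  have n2 : `|join (- z) 0| <= `|z|.
    rewrite -(norm_abs z) -absN; apply: norm_le; [exact: pp_ge0|exact: pp_le_abs].
  rewrite e; have := a0 i => -[_ ai].
  apply: (@le_trans _ _ ((phi (join z 0) i + phi (join (- z) 0) i) * `|L`_i|)).
    rewrite ler_pM2r //; apply: le_trans (ler_normB _ _) _; by rewrite !ger0_norm.
  rewrite mulrDl.
  move: q1 q2 n1 n2; set A := phi _ i * _; set B := phi _ i * _.
  set c := `|z|; set c1 := `|join z 0|; set c2 := `|join (- z) 0|.
  move=> *; lra.
have Psib : exists C : R, forall z, `|Psi z| <= C * `|z|.
  exists (2 * k%:R) => z; rewrite /Psi.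
  apply: le_trans (ler_norm_sum _ _ _) _.
  apply: le_trans (_ : \sum_(i < k) 2 * `|z| <= _).
    by apply: ler_sum => i _; rewrite normrM normr_id; apply: phib.
  rewrite sumr_const card_ord; have -> : 2 * `|z| *+ k = 2 * `|z| * k%:R by rewrite mulr_natr.
  by rewrite mulrAC.
have Psic : continuous Psi by apply: bound_cont.
have Psi0 : Psi 0 = 0 by apply: (@add_lin_0 _ _ Psi).
pose u := \sum_(i < k) `|L`_i|^-1 *: L`_i.
have u0 : le 0 u.
  apply: sum_ge0 => i _; apply: scale_ge0; last by case: (a0 i).
  by rewrite invr_ge0 ltW //; case: (a0 i).
have HPsi := hx u u0 Psi PsiD PsiZ Psic.
rewrite Psi0 in HPsi.
have M0 : 0 <= M by apply: le_trans (hM 0%N); apply: normr_ge0.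
have M1 : 0 < M + 1 by lra.
have key : forall n, `|x n| <= (M + 1) * Psi (lmeet join (labs join (x n - 0)) u).
  move=> n; rewrite subr0.
  set y := lmeet join (abs (x n)) u.
  have y0 : le 0 y by apply: meet_ge0; [exact: abs_ge0|exact: u0].
  have ny : `|y| <= Psi y.
    rewrite {1}(phiP y); apply: le_trans (ler_norm_sum _ _ _) _.
    apply: ler_sum => i _; rewrite normrZ ger0_norm //; by case: (phiB _ y0 i).
  have xu : le (abs (x n)) ((M + 1) *: u).
    rewrite {1}(phiP (abs (x n))) /u scaler_sumr; apply: le_sum => i _.
    rewrite scalerA; have [ai1 ai2] := a0 i.
    apply: scale_le => //.
    have [p q] := phiB _ (abs_ge0 (x n)) i.
    rewrite ler_pdivlMr //.
    apply: le_trans q _; rewrite norm_abs; apply: le_trans (hM n) _; lra.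
  have xy : le (abs (x n)) ((M + 1) *: y).
    rewrite -(meet_eq xu) /y -meet_scale ?ltW //.
    apply: meet_mono; last by apply: le_refl.
    rewrite -[X in le X _]scale1r; apply: scale_le; first exact: abs_ge0.
    lra.
  rewrite -norm_abs.
  apply: le_trans (norm_le (abs_ge0 _) xy) _.
  by rewrite normrZ (ger0_norm (ltW M1)) ler_pM2l.
apply/cvgr0Pnorm_lt => e e0.
have h := cvgr0_norm_lt _ HPsi _ (divr_gt0 e0 M1).
near=> n.
have hn : `|Psi (lmeet join (labs join (x n - 0)) u)| < e / (M + 1) by near: n; exact: h.
rewrite normr_id; apply: le_lt_trans (key n) _.
apply: le_lt_trans (ler_wpM2l (ltW M1) (ler_norm _)) _.
by rewrite -ltr_pdivlMl // mulrC.
Unshelve. all: by end_near.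
Qed.


End Lat.

Theorem corollary2p27 (R : realType) (E : completeNormedModType R)
  (le : E -> E -> Prop) (join : E -> E -> E) :
  is_banach_lattice le join ->
  (uaw_dunford_pettis le join (fun x : E => x) <-> finite_dimensional E).
Proof.
move=> HB; split; [exact: fwd|exact: bwd].
Qed.
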